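(* For any combinatorial auction as described in the context, there exist finitely many valid cuts such that, after adding them as artificial items, there is a price vector $p$ (on original and artificial items) for which $(x^*,p)$ is a price-match equilibrium of the augmented auction; that is, PME prices can always be generated via cuts.
   Context: Combinatorial auction: item types $j\in\mathcal J$ with supply $c_j\in\mathbb Z_{\ge1}$ (vector $c$); bidders $\mathcal I$; finite set of bids $\mathcal K$, bid $k$ made by bidder $i(k)$ with bundle $a^k\in\mathbb Z^J_{\ge0}$, $a^k\le c$, and amount $b_k\ge0$; $\mathcal K_i$ = bids of bidder $i$; bids taken truthful. $\bm A$ = matrix with columns $a^k$, $\bm B$ with $\bm B_{i,k}=1$ iff $k\in\mathcal K_i$. Feasible allocation: $x\in\{0,1\}^K$, $\bm Ax\le c$, $\bm Bx\le\bm 1$. $x^*$ is an efficient (optimal total bid amount) feasible allocation; $a^{i*},b_{i*}$ are bundle and amount of $i$'s accepted bid ($\bm 0,0$ if none). A Walrasian equilibrium (WE) is $(x^*,p)$ with $p\ge0$, $s_i=b_{i*}-p\,a^{i*}\ge0$, $p\,a^k+s_{i(k)}\ge b_k$ for all bids $k$, and $p_j=0$ whenever item $j$ is in excess supply under $x^*$. A WE is a price-match equilibrium (PME) if for every bidder $i$ there is a feasible allocation $x^{-i}$ with $x^{-i}_k=0$ for $k\in\mathcal K_i$, $p\,a^k\le b_k$ whenever $x^{-i}_k=1$, and $p\bm Ax^{-i}=p\bm Ax^*$. A valid cut is $(\alpha,\alpha_0)$, $\alpha\in\mathbb R^K_{\ge0}$, with $\alpha x\le\alpha_0$ for every feasible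 allocation $x$ and $\alpha x^*=\alpha_0$. Adding it as an artificial item means appending $\alpha$ as a new row of $\bm A$ with supply $\alpha_0$ (feasible allocations are unchanged); WE and PME in the augmented auction are defined with these extra items treated like original ones. *)

(* Defs.v *)
From mathcomp Require Import all_boot all_order all_algebra.
From mathcomp Require Import reals.
Set Implicit Arguments. Unset Strict Implicit. Unset Printing Implicit Defensive.
Import Order.TTheory GRing.Theory Num.Theory.
Local Open Scope ring_scope.

Section Auction.
Variable R : realType.
Variables (Item Bid Bidder : finType).

(* A general (possibly augmented) auction: items of type Item, bundle matrix
   A j k (entry of item j in bid k), supply s j, bidder of each bid, amount b k.
   An allocation is x : Bid -> bool. *)

Definition alloc_use (A : Item -> Bid -> R) (x : Bid -> bool) (j : Item) : R :=
  \sum_(k : Bid) (x k)%:R * A j k.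

Definition feasible (A : Item -> Bid -> R) (s : Item -> R)
    (bidder : Bid -> Bidder) (x : Bid -> bool) : Prop :=
  (forall j, alloc_use A x j <= s j) /\
  (forall i : Bidder, \sum_(k : Bid | bidder k == i) (x k)%:R <= (1 : R)).

Definition value (b : Bid -> R) (x : Bid -> bool) : R :=
  \sum_(k : Bid) (x k)%:R * b k.

Definition efficient (A : Item -> Bid -> R) (s : Item -> R)
    (bidder : Bid -> Bidder) (b : Bid -> R) (x : Bid -> bool) : Prop :=
  feasible A s bidder x /\
  forall y, feasible A s bidder y -> value b y <= value b x.

Definition bundle_price (A : Item -> Bid -> R) (p : Item -> R) (k : Bid) : R :=
  \sum_(j : Item) p j * A j k.

(* s_i = b_{i*} - p a^{i*}  (the sum has at most one nonzero term since
   B x <= 1; it is 0 if i has no accepted bid) *)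
Definition surplus (A : Item -> Bid -> R) (bidder : Bid -> Bidder)
    (b : Bid -> R) (x : Bid -> bool) (p : Item -> R) (i : Bidder) : R :=
  \sum_(k : Bid | bidder k == i) (x k)%:R * (b k - bundle_price A p k).

Definition walrasian_eq (A : Item -> Bid -> R) (s : Item -> R)
    (bidder : Bid -> Bidder) (b : Bid -> R) (x : Bid -> bool) (p : Item -> R)
    : Prop :=
  [/\ efficient A s bidder b x,
      (forall j, 0 <= p j),
      (forall i, 0 <= surplus A bidder b x p i),
      (forall k, b k <= bundle_price A p k + surplus A bidder b x p (bidder k))
    & (forall j, alloc_use A x j < s j -> p j = 0)].

Definition price_match_eq (A : Item -> Bid -> R) (s : Item -> R)
    (bidder : Bid -> Bidder) (b : Bid -> R) (x : Bid -> bool) (p : Item -> R)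
    : Prop :=
  walrasian_eq A s bidder b x p /\
  forall i : Bidder, exists xi : Bid -> bool,
    [/\ feasible A s bidder xi,
        (forall k, bidder k = i -> xi k = false),
        (forall k, xi k -> bundle_price A p k <= b k)
      & \sum_(j : Item) p j * alloc_use A xi j
        = \sum_(j : Item) p j * alloc_use A x j].

End Auction.

Section Cuts.
Variable R : realType.
Variables (Item Bid Bidder : finType).

Definition valid_cut (A : Item -> Bid -> R) (s : Item -> R)
    (bidder : Bid -> Bidder) (x : Bid -> bool) (alpha : Bid -> R) (alpha0 : R)
    : Prop :=
  [/\ (forall k, 0 <= alpha k),
      (forall y, feasible A s bidder y -> \sum_(k : Bid) (y k)%:R * alpha k <= alpha0)
    & \sum_(k : Bid) (x k)%:R * alpha k = alpha0].

Definition aug_A (m : nat) (A : Item -> Bid -> R) (alpha : 'I_m -> Bid -> R)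
    : (Item + 'I_m)%type -> Bid -> R :=
  fun t k => match t with inl j => A j k | inr l => alpha l k end.

Definition aug_s (m : nat) (s : Item -> R) (alpha0 : 'I_m -> R)
    : (Item + 'I_m)%type -> R :=
  fun t => match t with inl j => s j | inr l => alpha0 l end.

End Cuts.

(* Main.v *)
Require Import Defs.
From mathcomp Require Import all_boot all_order all_algebra.
From mathcomp Require Import reals.
From mathcomp Require Import ring lra.
From Stdlib Require Import FunctionalExtensionality Classical.
Set Implicit Arguments. Unset Strict Implicit. Unset Printing Implicit Defensive.
Import Order.TTheory GRing.Theory Num.Theory.
Local Open Scope ring_scope.

Lemma one_term (R : realType) (T : finType) (w : T -> bool) (g : T -> R) (f : R -> R) :
  f 0 = 0 -> \sum_k (w k)%:R <= (1 : R) ->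
  \sum_k (w k)%:R * f (g k) = f (\sum_k (w k)%:R * g k).
Proof.
move=> f0 H.
case: (boolP [exists k, w k]) => [/existsP [k0 wk0]|/existsPn nw].
  have others : forall k, k != k0 -> w k = false.
    move=> k kk0; apply/negP => wk; move: H.
    rewrite (bigD1 k0) //= (bigD1 k) //= wk0 wk.
    have : 0 <= \sum_(i | (i != k0) && (i != k)) (w i)%:R :> R.
      by apply: sumr_ge0 => i _; rewrite ler0n.
    move=> h1 h2; move: h2 h1; rewrite /= -!natr1 ?add0r; lra.
  rewrite (bigD1 k0) //= big1 ?addr0; last first.
    by move=> k kk0; rewrite others // mul0r.
  rewrite (bigD1 k0) //= [X in f (_ + X)]big1 ?addr0; last first.
    by move=> k kk0; rewrite others // mul0r.
  by rewrite wk0 !mul1r.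
rewrite big1; last by move=> k _; rewrite (negbTE (nw k)) mul0r.
by rewrite big1 // => k _; rewrite (negbTE (nw k)) mul0r.
Qed.

Lemma decomp (R : realType) (Bid Bidder : finType) (bidder : Bid -> Bidder)
  (y : Bid -> bool) (g : Bid -> R) :
  \sum_k (y k)%:R * g k = \sum_l \sum_k (y k && (bidder k == l))%:R * g k.
Proof.
rewrite exchange_big /=; apply: eq_bigr => k _.
rewrite (bigD1 (bidder k)) //= eqxx andbT big1 ?addr0 //.
by move=> l /negbTE hl; rewrite eq_sym hl andbF mul0r.
Qed.

Lemma mkw (R : realType) (Bid Bidder : finType) (bidder : Bid -> Bidder)
  (y : Bid -> bool) (l : Bidder) (g : Bid -> R) :
  \sum_(k | bidder k == l) (y k)%:R * g k = \sum_k (y k && (bidder k == l))%:R * g k.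
Proof.
rewrite big_mkcond /=; apply: eq_bigr => k _.
by case: (bidder k == l); rewrite ?andbT ?andbF ?mul0r.
Qed.

Definition pos (R : realType) (u : R) : R := if 0 <= u then u else 0.
Definition qv (R : realType) (Bid Bidder : finType) (b : Bid -> R) (bidder : Bid -> Bidder)
  (s : Bidder -> R) (k : Bid) : R := pos (b k - s (bidder k)).
Definition Fy (R : realType) (Bid Bidder : finType) (b : Bid -> R) (bidder : Bid -> Bidder)
  (y : Bid -> bool) (s : Bidder -> R) : R :=
  \sum_k (y k)%:R * qv b bidder s k + \sum_l s l.
Definition beta (R : realType) (Bid Bidder : finType) (b : Bid -> R) (bidder : Bid -> Bidder)
  (y : Bid -> bool) (s : Bidder -> R) (j : Bidder) : R :=
  \sum_k (y k && (bidder k == j))%:R * qv b bidder s k.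
Definition upd (R : realType) (Bidder : finType) (s : Bidder -> R) (j : Bidder) (d : R) :=
  fun l => s l + (l == j)%:R * d.

Lemma pos_ge0 (R : realType) (u : R) : 0 <= pos u.
Proof. by rewrite /pos; case: ifP => // _; lra. Qed.

Lemma sum_upd (R : realType) (Bidder : finType) (s : Bidder -> R) j d :
  \sum_l upd s j d l = \sum_l s l + d.
Proof.
rewrite /upd big_split /=; congr (_ + _).
by rewrite (bigD1 j) //= eqxx mul1r big1 ?addr0 // => l /negbTE ->; rewrite mul0r.
Qed.

Lemma qv_upd_other (R : realType) (Bid Bidder : finType) (b : Bid -> R) (bidder : Bid -> Bidder)
  s j d k : bidder k != j -> qv b bidder (upd s j d) k = qv b bidder s k.
Proof. by move=> /negbTE h; rewrite /qv /upd h mul0r addr0. Qed.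

Lemma qv_upd_j (R : realType) (Bid Bidder : finType) (b : Bid -> R) (bidder : Bid -> Bidder)
  s j d k : 0 <= d -> bidder k == j ->
  qv b bidder (upd s j d) k = pos (qv b bidder s k - d).
Proof.
move=> d0 /eqP h; rewrite /qv /upd h eqxx mul1r /pos.
case: (boolP (0 <= b k - s j)) => h1; case: (boolP (0 <= b k - (s j + d))) => h2;
  case: (boolP (0 <= b k - s j - d)) => h3; try lra;
  case: (boolP (0 <= 0 - d)) => h4; lra.
Qed.

Lemma K (R : realType) (Bid Bidder : finType) (b : Bid -> R) (bidder : Bid -> Bidder)
  (y : Bid -> bool) s j d :
  (forall l, \sum_k (y k && (bidder k == l))%:R <= (1 : R)) -> 0 <= d ->
  Fy b bidder y (upd s j d) = Fy b bidder y s + pos (d - beta b bidder y s j).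
Proof.
move=> H1 d0.
have E : \sum_k (y k)%:R * qv b bidder (upd s j d) k =
  \sum_k (y k)%:R * qv b bidder s k +
  \sum_k (y k && (bidder k == j))%:R * (pos (qv b bidder s k - d) - qv b bidder s k).
  rewrite -big_split /=; apply: eq_bigr => k _.
  case: (boolP (bidder k == j)) => h.
    rewrite andbT qv_upd_j //; ring.
  by rewrite andbF mul0r addr0 qv_upd_other.
rewrite /Fy E sum_upd.
rewrite (@one_term R Bid (fun k => y k && (bidder k == j)) (qv b bidder s)
   (fun u => pos (u - d) - u)); last by apply: H1.
  rewrite -/(beta b bidder y s j).
  move: (beta b bidder y s j) => B; rewrite /pos.
  by case: (boolP (0 <= B - d)) => h1; case: (boolP (0 <= d - B)) => h2; lra.
by rewrite /pos; case: (boolP (0 <= 0 - d)) => h; lra.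
Qed.

Lemma minex (R : realType) (T : eqType) (P : T -> Prop) (g : T -> R) (a : R) (r : seq T) :
  exists d, [/\ d <= a, (forall t, t \in r -> P t -> d <= g t) &
               (d = a \/ exists t, P t /\ d = g t)].
Proof.
elim: r => [|t r [d [da dr dd]]].
  by exists a; split => //; left.
case: (Classical_Prop.classic (P t)) => Pt; last first.
  exists d; split => // t'; rewrite in_cons => /orP [/eqP -> //|]; exact: dr.
case: (lerP d (g t)) => hd.
  exists d; split => // t'; rewrite in_cons => /orP [/eqP -> //|]; exact: dr.
exists (g t); split.
- lra.
- move=> t'; rewrite in_cons => /orP [/eqP -> //|] tr Pt'.
  have := dr t' tr Pt'; lra.
- by right; exists t.
Qed.

Lemma ffun_id (Bid : finType) (y : Bid -> bool) : fun_of_fin [ffun k => y k] = y.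
Proof. by apply: functional_extensionality => k; rewrite ffunE. Qed.

Lemma Fy_remove (R : realType) (Bid Bidder : finType) (b : Bid -> R) (bidder : Bid -> Bidder)
  (y : Bid -> bool) s j :
  Fy b bidder (fun k => y k && (bidder k != j)) s = Fy b bidder y s - beta b bidder y s j.
Proof.
rewrite /Fy /beta.
have -> : \sum_k (y k && (bidder k != j))%:R * qv b bidder s k =
   \sum_k (y k)%:R * qv b bidder s k - \sum_k (y k && (bidder k == j))%:R * qv b bidder s k.
  rewrite -sumrB; apply: eq_bigr => k _.
  by case: (y k); case: (bidder k == j) => /=; ring.
ring.
Qed.

Lemma beta_upd (R : realType) (Bid Bidder : finType) (b : Bid -> R) (bidder : Bid -> Bidder)
  (y : Bid -> bool) s j d :
  (forall l, \sum_k (y k && (bidder k == l))%:R <= (1 : R)) -> 0 <= d ->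
  beta b bidder y (upd s j d) j = pos (beta b bidder y s j - d).
Proof.
move=> H1 d0; rewrite /beta.
rewrite -(@one_term R Bid (fun k => y k && (bidder k == j)) (qv b bidder s)
   (fun u => pos (u - d))); last by apply: H1.
  apply: eq_bigr => k _; case: (boolP (bidder k == j)) => h; last by rewrite andbF !mul0r.
  by rewrite qv_upd_j.
by rewrite /pos; case: (boolP (0 <= 0 - d)) => h; lra.
Qed.

Lemma beta_xs (R : realType) (Bid Bidder : finType) (b : Bid -> R) (bidder : Bid -> Bidder)
  (y : Bid -> bool) s j :
  (forall l, \sum_k (y k && (bidder k == l))%:R <= (1 : R)) -> 0 <= s j ->
  beta b bidder y s j = pos (\sum_k (y k && (bidder k == j))%:R * b k - s j).
Proof.
move=> H1 d0; rewrite /beta.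
rewrite -(@one_term R Bid (fun k => y k && (bidder k == j)) b
   (fun u => pos (u - s j))); last by apply: H1.
  apply: eq_bigr => k _; case: (boolP (bidder k == j)) => h; last by rewrite andbF !mul0r.
  by rewrite /qv (eqP h).
by rewrite /pos; case: (boolP (0 <= 0 - s j)) => h; lra.
Qed.

Lemma Xtight (R : realType) (Bid Bidder : finType) (b : Bid -> R) (bidder : Bid -> Bidder)
  (y : Bid -> bool) s :
  (forall l, \sum_k (y k && (bidder k == l))%:R <= (1 : R)) ->
  (forall l, 0 <= s l /\ s l <= \sum_k (y k && (bidder k == l))%:R * b k) ->
  Fy b bidder y s = value b y.
Proof.
move=> H1 Hs; rewrite /Fy /value (decomp bidder y (qv b bidder s)) (decomp bidder y b).
have -> : \sum_l \sum_k (y k && (bidder k == l))%:R * qv b bidder s k =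
  \sum_l (\sum_k (y k && (bidder k == l))%:R * b k - s l).
  apply: eq_bigr => l _; rewrite -/(beta b bidder y s l) beta_xs //; last by case: (Hs l).
  rewrite /pos; case: (Hs l) => h1 h2; case: ifP => // /negbT; lra.
by rewrite sumrB; ring.
Qed.

Definition bstar (R : realType) (Bid Bidder : finType) (b : Bid -> R) (bidder : Bid -> Bidder)
  (xs : Bid -> bool) (l : Bidder) : R := \sum_k (xs k && (bidder k == l))%:R * b k.

Definition Inv (R : realType) (Bid Bidder : finType) (b : Bid -> R) (bidder : Bid -> Bidder)
  (xs : Bid -> bool) (feas : (Bid -> bool) -> Prop) (s : Bidder -> R) : Prop :=
  (forall l, 0 <= s l /\ s l <= bstar b bidder xs l) /\
  (forall y, feas y -> Fy b bidder y s <= value b xs).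

Definition Tight (R : realType) (Bid Bidder : finType) (b : Bid -> R) (bidder : Bid -> Bidder)
  (xs : Bid -> bool) (feas : (Bid -> bool) -> Prop) (s : Bidder -> R) (j : Bidder) : Prop :=
  exists y, [/\ feas y, (forall k, bidder k = j -> y k = false) & Fy b bidder y s = value b xs].

Lemma pos_spec (R : realType) (u : R) : (0 <= u /\ pos u = u) \/ (u < 0 /\ pos u = 0).
Proof. rewrite /pos; case: (lerP 0 u) => h; [left|right]; split => //. Qed.

Lemma qv_ge0 (R : realType) (Bid Bidder : finType) (b : Bid -> R) (bidder : Bid -> Bidder) s k :
  0 <= qv b bidder s k.
Proof. exact: pos_ge0. Qed.

Lemma beta_ge0 (R : realType) (Bid Bidder : finType) (b : Bid -> R) (bidder : Bid -> Bidder) y s j :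
  0 <= beta b bidder y s j.
Proof. by apply: sumr_ge0 => k _; apply: mulr_ge0; [rewrite ler0n|apply: qv_ge0]. Qed.

Lemma step (R : realType) (Bid Bidder : finType) (b : Bid -> R) (bidder : Bid -> Bidder)
  (xs : Bid -> bool) (feas : (Bid -> bool) -> Prop)
  (Hone : forall y, feas y -> forall l, \sum_k (y k && (bidder k == l))%:R <= (1 : R))
  (Hdown : forall y l, feas y -> feas (fun k => y k && (bidder k != l)))
  (Hxs : feas xs) s j :
  Inv b bidder xs feas s ->
  exists d, [/\ 0 <= d, Inv b bidder xs feas (upd s j d) & Tight b bidder xs feas (upd s j d) j].
Proof.
move=> [Hs HF].
pose V := value b xs.
have [d [da dr dd]] := minex (fun t : {ffun Bid -> bool} => feas t)
   (fun t => V - Fy b bidder t s + beta b bidder t s j) (bstar b bidder xs j - s j)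
   (enum {ffun Bid -> bool}).
have dr' : forall y, feas y -> d <= V - Fy b bidder y s + beta b bidder y s j.
  move=> y fy; have := dr [ffun k => y k]; rewrite mem_enum ffun_id; apply => //.
have d0 : 0 <= d.
  case: dd => [->|[t [ft ->]]]; first by case: (Hs j) => h1 h2; lra.
  have := HF _ ft; have := beta_ge0 b bidder t s j; rewrite -/V; lra.
have Hs' : forall l, 0 <= upd s j d l /\ upd s j d l <= bstar b bidder xs l.
  move=> l; rewrite /upd; case: (Hs l) => h1 h2.
  case: (eqVneq l j) => [E|hne].
    subst l; rewrite /= mulr1n mul1r; lra.
  rewrite /= mulr0n mul0r addr0; lra.
exists d; split => //.
  split => // y fy; rewrite K //; last exact: Hone.
  have := dr' y fy; have := HF y fy; rewrite -/V /pos.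
  by case: ifP => _; lra.
have Xt : Fy b bidder xs (upd s j d) = V by apply: Xtight => //; apply: Hone.
case: dd => [dE|[t [ft dE]]].
  exists (fun k => xs k && (bidder k != j)); split.
  - exact: Hdown.
  - by move=> k ->; rewrite eqxx andbF.
  rewrite Fy_remove Xt beta_xs //; last by case: (Hs' j).
  - rewrite /upd eqxx mul1r dE -/(bstar b bidder xs j).
    rewrite /pos /V; case: ifP => _; lra.
  - exact: Hone.
exists (fun k => t k && (bidder k != j)); split.
- exact: Hdown.
- by move=> k ->; rewrite eqxx andbF.
have Ht := HF t ft.
rewrite Fy_remove K //; last exact: Hone.
rewrite beta_upd //; last exact: Hone.
rewrite dE /V.
set B := beta _ _ _ _ _; set F := Fy _ _ _ _.
case: (pos_spec (value b xs - F + B - B)) => [[h1 ->]|[h1 ->]];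
case: (pos_spec (B - (value b xs - F + B))) => [[h2 ->]|[h2 ->]]; lra.
Qed.

Lemma persist (R : realType) (Bid Bidder : finType) (b : Bid -> R) (bidder : Bid -> Bidder)
  (xs : Bid -> bool) (feas : (Bid -> bool) -> Prop)
  (Hone : forall y, feas y -> forall l, \sum_k (y k && (bidder k == l))%:R <= (1 : R))
  s j d l :
  0 <= d -> Inv b bidder xs feas (upd s j d) ->
  Tight b bidder xs feas s l -> Tight b bidder xs feas (upd s j d) l.
Proof.
move=> d0 [_ HF] [y [fy yl Fe]]; exists y; split => //.
have := HF y fy; rewrite K //; last exact: Hone.
rewrite Fe; have := pos_ge0 (d - beta b bidder y s j); lra.
Qed.

Lemma all_tight (R : realType) (Bid Bidder : finType) (b : Bid -> R) (bidder : Bid -> Bidder)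
  (xs : Bid -> bool) (feas : (Bid -> bool) -> Prop)
  (hb : forall k, 0 <= b k)
  (Hone : forall y, feas y -> forall l, \sum_k (y k && (bidder k == l))%:R <= (1 : R))
  (Hdown : forall y l, feas y -> feas (fun k => y k && (bidder k != l)))
  (Hxs : feas xs) (Hopt : forall y, feas y -> value b y <= value b xs) (r : seq Bidder) :
  exists s, Inv b bidder xs feas s /\ forall l, l \in r -> Tight b bidder xs feas s l.
Proof.
elim: r => [|j r [s [Is Ts]]].
  exists (fun _ => 0); split => //; split.
    move=> l; split => //; apply: sumr_ge0 => k _; apply: mulr_ge0 => //; rewrite ler0n.
  move=> y fy; have Z : \sum_(l : Bidder) (0:R) = 0 by rewrite big1.
  rewrite /Fy Z addr0.
  have -> : \sum_k (y k)%:R * qv b bidder (fun=> 0) k = value b y.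
    by apply: eq_bigr => k _; rewrite /qv subr0 /pos hb.
  exact: Hopt.
have [d [d0 Is' Tj]] := step Hone Hdown Hxs j Is.
exists (upd s j d); split => // l; rewrite in_cons => /orP [/eqP -> //|lr].
exact: (persist Hone d0 Is' (Ts l lr)).
Qed.

Lemma one_of_feas (R : realType) (Item Bid Bidder : finType) (A : Item -> Bid -> R) (S : Item -> R)
  (bidder : Bid -> Bidder) y :
  feasible A S bidder y -> forall l, \sum_k (y k && (bidder k == l))%:R <= (1 : R).
Proof.
move=> [_ H] l; have := H l; rewrite big_mkcond /=.
have -> : \sum_k (if bidder k == l then (y k)%:R else 0) = \sum_k (y k && (bidder k == l))%:R :> R.
  by apply: eq_bigr => k _; case: (bidder k == l); rewrite ?andbT ?andbF.
by [].
Qed.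

Lemma down_feas (R : realType) (Item Bid Bidder : finType) (A : Item -> Bid -> R) (S : Item -> R)
  (bidder : Bid -> Bidder) (hA : forall j k, 0 <= A j k) y l :
  feasible A S bidder y -> feasible A S bidder (fun k => y k && (bidder k != l)).
Proof.
move=> [H1 H2]; split.
  move=> j; apply: le_trans (H1 j); rewrite /alloc_use; apply: ler_sum => k _.
  case: (y k); case: (bidder k != l) => /=; rewrite ?mul1r ?mul0r //; lra.
move=> i; apply: le_trans (H2 i); apply: ler_sum => k _.
by case: (y k); case: (bidder k != l) => /=; rewrite ?ler_nat.
Qed.

Theorem corollary2 (R : realType) (Item Bid Bidder : finType)
    (c : Item -> nat) (a : Bid -> Item -> nat) (b : Bid -> R)
    (bidder : Bid -> Bidder) (xstar : Bid -> bool)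
    (hc : forall j, (1 <= c j)%N)
    (ha : forall k j, (a k j <= c j)%N)
    (hb : forall k, 0 <= b k)
    (heff : efficient (fun j k => (a k j)%:R) (fun j => (c j)%:R) bidder b xstar) :
  exists (m : nat) (alpha : 'I_m -> Bid -> R) (alpha0 : 'I_m -> R),
    (forall l, valid_cut (fun j k => (a k j)%:R) (fun j => (c j)%:R) bidder xstar
                 (alpha l) (alpha0 l)) /\
    exists p : (Item + 'I_m)%type -> R,
      price_match_eq (aug_A (fun j k => (a k j)%:R) alpha)
                     (aug_s (fun j => (c j)%:R) alpha0) bidder b xstar p.
Proof.
set A := (fun j k => (a k j)%:R : R).
set S := (fun j => (c j)%:R : R).
have hA : forall j k, 0 <= A j k by move=> j k; rewrite /A ler0n.
have Hone := @one_of_feas R Item Bid Bidder A S bidder.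
have Hdown := @down_feas R Item Bid Bidder A S bidder hA.
case: heff => Hxs Hopt.
have [s [[Hs HF] Ts]] := all_tight hb Hone Hdown Hxs Hopt (enum Bidder).
have Xt : Fy b bidder xstar s = value b xstar by apply: Xtight => //; apply: Hone.
pose q := qv b bidder s.
pose a0 := \sum_k (xstar k)%:R * q k.
have Hq : forall y, feasible A S bidder y -> \sum_k (y k)%:R * q k <= a0.
  move=> y fy; have := HF y fy; rewrite -Xt /Fy /a0 /q; lra.
exists 1%N, (fun _ => q), (fun _ => a0); split.
  move=> l; split => //; first by move=> k; apply: qv_ge0.
pose p := fun t : (Item + 'I_1)%type => match t with inl _ => 0 | inr _ => 1 : R end.
exists p.
have augE : forall y, feasible A S bidder y ->
    feasible (aug_A A (fun _ : 'I_1 => q)) (aug_s S (fun _ : 'I_1 => a0)) bidder y.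
  move=> y fy; split; last by case: fy.
  by case=> [j|l]; rewrite /alloc_use /=; [case: fy => H _; apply: H|apply: Hq].
have augI : forall y, feasible (aug_A A (fun _ : 'I_1 => q)) (aug_s S (fun _ : 'I_1 => a0)) bidder y ->
    feasible A S bidder y.
  by move=> y [H1 H2]; split => // j; apply: (H1 (inl j)).
have bpE : forall k, bundle_price (aug_A A (fun _ : 'I_1 => q)) p k = q k.
  move=> k; rewrite /bundle_price big_sumType /= big1 ?add0r; last by move=> j _; rewrite mul0r.
  by rewrite big_ord1 mul1r.
have revE : forall y, \sum_t p t * alloc_use (aug_A A (fun _ : 'I_1 => q)) y t
                      = \sum_k (y k)%:R * q k.
  move=> y; rewrite big_sumType /= big1 ?add0r; last by move=> j _; rewrite mul0r.
  by rewrite big_ord1 mul1r.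
have surE : forall i, surplus (aug_A A (fun _ : 'I_1 => q)) bidder b xstar p i = s i.
  move=> i; rewrite /surplus.
  rewrite (eq_bigr (fun k => (xstar k)%:R * (b k - q k))); last by move=> k _; rewrite bpE.
  rewrite (mkw bidder xstar i (fun k => b k - q k)).
  rewrite (eq_bigr (fun k => (xstar k && (bidder k == i))%:R * (fun u => u - pos (u - s i)) (b k))); last first.
    move=> k _; case: (boolP (bidder k == i)) => h; last by rewrite andbF !mul0r.
    by rewrite /q /qv (eqP h).
  rewrite (@one_term R Bid (fun k => xstar k && (bidder k == i)) b (fun u => u - pos (u - s i))); last exact: Hone.
    rewrite -/(bstar b bidder xstar i); case: (Hs i) => h1 h2.
    by case: (pos_spec (bstar b bidder xstar i - s i)) => [[h3 ->]|[h3 ->]]; lra.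
  by case: (Hs i) => h1 _; case: (pos_spec (0 - s i)) => [[h3 ->]|[h3 ->]]; lra.
have qb : forall k, q k <= b k.
  move=> k; rewrite /q /qv; case: (Hs (bidder k)) => h1 _; have := hb k.
  by case: (pos_spec (b k - s (bidder k))) => [[h3 ->]|[h3 ->]]; lra.
split.
  split.
  - split; first by apply: augE.
    by move=> y /augI fy; apply: Hopt.
  - by case=> [j|l]; rewrite /p //; lra.
  - by move=> i; rewrite surE; case: (Hs i).
  - move=> k; rewrite bpE surE /q /qv.
    by case: (pos_spec (b k - s (bidder k))) => [[h3 ->]|[h3 ->]]; lra.
  - case=> [j|l] //; rewrite /alloc_use /= -/a0; by rewrite ltxx.
move=> i.
have [y [fy yi Fe]] := Ts i (mem_enum _ i).
exists y; split.
- exact: augE.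
- exact: yi.
- by move=> k _; rewrite bpE.
- rewrite !revE; move: Fe; rewrite -Xt /Fy; lra.
Qed.
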